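(* Let $n>1$ be an odd integer, $k\ge1$, and $p$ the smallest prime divisor of $n$. Then $\mathrm{C}^{n,k}_{\mathrm{RDH}}$ is a $\frac{1}{(p-1)n^{k-1}},\frac{1}{p-1}$-authentication code with secrecy for equiprobable source states on $\mathbb{Z}_n^k\setminus\{\mathbf{0}\}$; that is, it provides $\frac{1}{(p-1)n^{k-1}}$-secrecy on $\mathbb{Z}_n^k\setminus\{\mathbf{0}\}$ and is $\frac{1}{p-1}$-secure against substitution attacks.
   Context: For $\mathbf{y}\in(\mathbb{Z}_n^* )^k$ and $\mathbf{m}\in\mathbb{Z}_n^k$ let $\Upsilon_{\mathbf{y}}(\mathbf{m})=\sum_{i=1}^k m_iy_i\bmod n$. The code $\mathrm{C}^{n,k}_{\mathrm{RDH}}$ has source states $\mathcal{S}=\mathbb{Z}_n^k$, keys $\mathcal{K}=\mathbb{Z}_n^k\times(\mathbb{Z}_n^* )^k$ (pairs $\mathbf{x}\|\mathbf{y}$), ciphertexts $\mathcal{M}=\mathbb{Z}_n^k\times\mathbb{Z}_n$ (pairs $\mathbf{c}\|t$). Encryption: $\mathcal{E}_{\mathbf{x}\|\mathbf{y}}(\mathbf{m})=(\mathbf{m}+\mathbf{x}\bmod n)\,\|\,\Upsilon_{\mathbf{y}}(\mathbf{m})$ (componentwise addition). Decryption: $\mathcal{D}_{\mathbf{x}\|\mathbf{y}}(\mathbf{c}\|t)=\mathbf{c}-\mathbf{x}\bmod n$ if $\Upsilon_{\mathbf{y}}(\mathbf{c}-\mathbf{x})=t$, and $\bot$ otherwise.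 Source states and keys are chosen uniformly and independently. The code provides $\varepsilon$-secrecy on $\mathcal{S}'\subseteq\mathcal{S}$ if for every $\mathbf{m}\in\mathcal{S}'$ and every $c\in\mathcal{M}$ (with the conditioning event of positive probability), $\Pr_{\mathbf{m}'\leftarrow\mathcal{S},\kappa\leftarrow\mathcal{K}}[\mathbf{m}'=\mathbf{m}\mid\mathcal{E}_\kappa(\mathbf{m}')=c]\le\varepsilon$. A forger is an arbitrary function $\mathcal{F}:\mathcal{M}\to\mathcal{M}$; the code is $\delta$-secure against substitution attacks if for every forger $\mathcal{F}$, $\Pr_{\mathbf{m}\leftarrow\mathcal{S},\kappa\leftarrow\mathcal{K}}[\mathcal{F}(c)\ne c\ \wedge\ \mathcal{D}_\kappa(\mathcal{F}(c))\ne\bot]\le\delta$ where $c=\mathcal{E}_\kappa(\mathbf{m})$. It is an $\varepsilon,\delta$-authentication code with secrecy for equiprobable source states on $\mathcal{S}'$ if both hold. *)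

(* Defs.v *)
From HB Require Import structures.
From mathcomp Require Import all_boot all_order all_algebra.
Set Implicit Arguments. Unset Strict Implicit. Unset Printing Implicit Defensive.
Import GRing.Theory Num.Theory.
Local Open Scope ring_scope.

Definition src (n k : nat) := {ffun 'I_k -> 'Z_n}.
(* Raw key type Z_n^k x Z_n^k; the actual key space requires y to be units. *)
Definition keyT (n k : nat) := (src n k * src n k)%type.
Definition ctT (n k : nat) := (src n k * 'Z_n)%type.

Definition keys (n k : nat) : {set keyT n k} :=
  [set kap : keyT n k | [forall i, kap.2 i \is a GRing.unit]].

Definition Ups (n k : nat) (y m : src n k) : 'Z_n := \sum_(i < k) m i * y i.

Definition enc (n k : nat) (kap : keyT n k) (m : src n k) : ctT n k :=
  ([ffun i => m i + kap.1 i], Ups kap.2 m).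

Definition dec (n k : nat) (kap : keyT n k) (c : ctT n k) : option (src n k) :=
  let m := [ffun i => c.1 i - kap.1 i] in
  if Ups kap.2 m == c.2 then Some m else None.

(* Pr_{m' <- S, kap <- K}[m' = m | E_kap(m') = c], as a ratio of counts
   (uniform independent choice of m' and kap). *)
Definition cond_prob (n k : nat) (m : src n k) (c : ctT n k) : rat :=
  (#|[set mk : src n k * keyT n k | (mk.2 \in keys n k) && (enc mk.2 mk.1 == c) && (mk.1 == m)]|%:R)
  / (#|[set mk : src n k * keyT n k | (mk.2 \in keys n k) && (enc mk.2 mk.1 == c)]|%:R).

Definition cond_event_count (n k : nat) (c : ctT n k) : nat :=
  #|[set mk : src n k * keyT n k | (mk.2 \in keys n k) && (enc mk.2 mk.1 == c)]|.

Definition provides_secrecy (n k : nat) (eps : rat) (S' : {set src n k}) : Prop :=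
  forall (m : src n k) (c : ctT n k), m \in S' ->
    (0 < cond_event_count c)%N -> cond_prob m c <= eps.

Definition forge_prob (n k : nat) (F : ctT n k -> ctT n k) : rat :=
  (#|[set mk : src n k * keyT n k | (mk.2 \in keys n k) &&
        (F (enc mk.2 mk.1) != enc mk.2 mk.1) && (dec mk.2 (F (enc mk.2 mk.1)) != None)]|%:R)
  / ((#|[set: src n k]| * #|keys n k|)%N%:R).

Definition substitution_secure (n k : nat) (delta : rat) : Prop :=
  forall F : ctT n k -> ctT n k, forge_prob F <= delta.

Definition auth_code_with_secrecy (n k : nat) (eps delta : rat) (S' : {set src n k}) : Prop :=
  provides_secrecy eps S' /\ substitution_secure n k delta.

(* Main.v *)
Require Import Defs.
From HB Require Import structures.
From mathcomp Require Import all_boot all_order all_algebra.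
From mathcomp Require Import ring.
Import GRing.Theory Num.Theory.
Local Open Scope ring_scope.
Lemma card_sum (T : finType) (P : pred T) : #|[set x | P x]| = (\sum_x P x)%N.
Proof.
rewrite -sum1_card big_mkcond /=; apply: eq_bigr => x _; rewrite inE; by case: (P x).
Qed.

Lemma unit_small (n v : nat) : (1 < n)%N -> (0 < v)%N -> (v < pdiv n)%N ->
  (v%:R : 'Z_n) \is a GRing.unit.
Proof.
move=> n1 v0 vp; rewrite unitZpE //.
have g0 : (0 < gcdn n v)%N by rewrite gcdn_gt0 v0 orbT.
rewrite /coprime; case: (ltngtP (gcdn n v) 1) => // [g|g1]; first by rewrite ltnNge g0 in g.
have := pdiv_min_dvd g1 (dvdn_gcdl n v).
have := dvdn_leq v0 (dvdn_gcdr n v).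
move=> a b; have := leq_trans b a; by rewrite leqNgt vp.
Qed.

Lemma Ups_add n k (y m d : src n k) :
  Ups y [ffun i => m i + d i] = Ups y m + Ups y d.
Proof. by rewrite /Ups -big_split; apply: eq_bigr => i _; rewrite ffunE mulrDl. Qed.

Lemma Ups_delta n k (y : src n k) (j : 'I_k) (a : 'Z_n) :
  Ups y [ffun i => if i == j then a else 0] = a * y j.
Proof.
rewrite /Ups (bigD1 j) //= big1 ?addr0; first by rewrite ffunE eqxx.
by move=> i /negbTE ij; rewrite ffunE ij mul0r.
Qed.

Lemma card_Zn n : (1 < n)%N -> #|{: 'Z_n}| = n.
Proof. by move=> n1; rewrite card_ord Zp_cast. Qed.

Lemma card_src n k : (1 < n)%N -> #|{: src n k}| = (n ^ k)%N.
Proof. by move=> n1; rewrite card_ffun !card_ord Zp_cast. Qed.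

Lemma fiber_const n k (y : src n k) (j : 'I_k) (t t' : 'Z_n) :
  y j \is a GRing.unit ->
  (\sum_(m : src n k) (Ups y m == t))%N = (\sum_(m : src n k) (Ups y m == t'))%N.
Proof.
move=> yu.
pose d : src n k := [ffun i => if i == j then (t - t') / y j else 0].
pose h (m : src n k) : src n k := [ffun i => m i + d i].
have hinj : injective h.
  move=> a b /ffunP hab; apply/ffunP => i; have := hab i; rewrite !ffunE.
  by move/addIr.
rewrite (reindex_inj hinj) /=; apply: eq_bigr => m _.
rewrite /h Ups_add Ups_delta divrK //.
by rewrite -opprB subr_eq addrC subrK.
Qed.

Lemma fiber_card n k (y : src n k) (t : 'Z_n) : (1 < n)%N -> (0 < k)%N ->
  [forall i, y i \is a GRing.unit] ->
  (\sum_(m : src n k) (Ups y m == t))%N = (n ^ k.-1)%N.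
Proof.
move=> n1; case: k y t => // k y t _ /forallP yu.
have tot : (\sum_(t' : 'Z_n) \sum_(m : src n k.+1) (Ups y m == t'))%N = (n ^ k.+1)%N.
  rewrite exchange_big /= -(@card_src n k.+1 n1) -sum1_card; apply: eq_bigr => m _.
  rewrite (bigD1 (Ups y m)) //= eqxx big1 // => u /negbTE.
by rewrite eq_sym => ->.
have : (\sum_(t' : 'Z_n) \sum_(m : src n k.+1) (Ups y m == t'))%N =
       (n * \sum_(m : src n k.+1) (Ups y m == t))%N.
  rewrite (eq_bigr (fun _ => \sum_(m : src n k.+1) (Ups y m == t))%N).
    by rewrite sum_nat_const card_Zn.
  by move=> t' _; apply: fiber_const (yu ord0).
rewrite tot expnS => /eqP; rewrite eqn_mul2l => /orP[/eqP n0|/eqP <-] //.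
by rewrite n0 in n1.
Qed.
Definition Uset n k : {set src n k} := [set y : src n k | [forall i, y i \is a GRing.unit]].

Lemma cancel_small n (a b : nat) (x : 'Z_n) : (1 < n)%N -> (a < b)%N -> (b < pdiv n)%N ->
  a%:R * x = b%:R * x -> x = 0.
Proof.
move=> n1 ab bp e.
have : (b - a)%:R * x = 0 by rewrite natrB ?(ltnW ab) // mulrBl e subrr.
have u : ((b - a)%:R : 'Z_n) \is a GRing.unit.
  apply: unit_small => //; first by rewrite subn_gt0.
  exact: leq_ltn_trans (leq_subr _ _) bp.
by move=> H; apply: (mulrI u); rewrite H mulr0.
Qed.

Lemma lt_pred (a p : nat) : (1 < p)%N -> (a < p.-1)%N -> (a.+1 < p)%N.
Proof. by case: p. Qed.

Lemma key_bound n k (m : src n k) (t : 'Z_n) : (1 < n)%N -> m != 0 ->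
  ((pdiv n).-1 * #|[set y in Uset n k | Ups y m == t]| <= #|Uset n k|)%N.
Proof.
move=> n1 m0.
have [j mj] : exists j, m j != 0.
  case: (pickP (fun j => m j != 0)) => [j mj|H]; first by exists j.
  case/negP: m0; apply/eqP/ffunP => i; rewrite ffunE; have := H i.
  by move/negbFE/eqP.
have pp : prime (pdiv n) by apply: pdiv_prime.
pose B := [set y in Uset n k | Ups y m == t].
pose f (p : 'I_(pdiv n).-1 * src n k) : src n k :=
  [ffun i => if i == j then (p.1.+1)%:R * p.2 i else p.2 i].
have vu (v : 'I_(pdiv n).-1) : ((v.+1)%:R : 'Z_n) \is a GRing.unit.
  apply: unit_small => //; apply: lt_pred (prime_gt1 pp) (ltn_ord v).
have sub : f @: setX [set: 'I_(pdiv n).-1] B \subset Uset n k.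
  apply/subsetP => _ /imsetP [[v y] /= H ->].
  move: H; rewrite in_setX !inE /= => /andP [/forallP yu _].
  apply/forallP => i; rewrite /f ffunE /=; case: (i == j) => //.
  by rewrite unitrM vu yu.
have inj : {in setX [set: 'I_(pdiv n).-1] B &, injective f}.
  move=> [v y] [w z]; rewrite !in_setX !inE /= => /andP [/forallP yu /eqP ey].
  move=> /andP [/forallP zu /eqP ez] /ffunP E.
  have oth i : i != j -> y i = z i.
    by move=> /negbTE ij; have := E i; rewrite !ffunE ij.
  have Ej : (v.+1)%:R * y j = (w.+1)%:R * z j :> 'Z_n.
    by have := E j; rewrite !ffunE eqxx.
  have Emj : m j * y j = m j * z j.
    have : Ups y m = Ups z m by rewrite ey ez.
    rewrite /Ups (bigD1 j) // [in RHS](bigD1 j) //=.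
    rewrite (eq_bigr (fun i => m i * z i)); first by move/addIr.
    by move=> i ij; rewrite oth.
  have key : (v.+1)%:R * (m j * y j) = (w.+1)%:R * (m j * y j) :> 'Z_n.
    by rewrite mulrCA Ej [in RHS]Emj mulrCA.
  have vw : v = w.
    apply: val_inj => /=; case: (ltngtP v w) => // [vw|wv].
    - case/negP: mj; apply/eqP; apply: (mulIr (yu j)); rewrite mul0r.
      apply: (@cancel_small n v.+1 w.+1) => //.
      exact: lt_pred (prime_gt1 pp) (ltn_ord w).
    - case/negP: mj; apply/eqP; apply: (mulIr (yu j)); rewrite mul0r.
      apply: (@cancel_small n w.+1 v.+1) => //.
      exact: lt_pred (prime_gt1 pp) (ltn_ord v).
  subst w; congr pair; apply/ffunP => i.
  case: (eqVneq i j) => [->|ij]; last exact: oth.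
  by apply: (mulrI (vu v)).
apply: leq_trans (subset_leq_card sub).
by rewrite (card_in_imset inj) cardsX cardsT card_ord.
Qed.
Lemma sum_pair (I J : finType) (G : I * J -> nat) :
  (\sum_p G p = \sum_i \sum_j G (i, j))%N.
Proof. by rewrite pair_big; apply: eq_bigr => -[]. Qed.

Lemma card_sumA (T : finType) (A : {set T}) : #|A| = (\sum_x (x \in A))%N.
Proof. by rewrite -sum1_card big_mkcond /=; apply: eq_bigr => x _; case: (x \in A). Qed.

Lemma inner_x n k (m : src n k) (a : src n k) (t : 'Z_n) (y : src n k) :
  (\sum_(x : src n k) (((x, y) \in keys n k) && (enc (x, y) m == (a, t))))%N
  = ((y \in Uset n k) && (Ups y m == t)).
Proof.
rewrite (bigD1 [ffun i => a i - m i]) //= big1 ?addn0.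
  rewrite !inE /enc /= xpair_eqE.
  have -> : [ffun i => m i + [ffun i0 => a i0 - m i0] i] == a.
    by apply/eqP/ffunP => i; rewrite !ffunE addrC subrK.
  by [].
move=> x xne; apply/eqP; rewrite eqb0; apply/negP.
rewrite /enc xpair_eqE /= => /andP [_ /andP [/eqP e _]].
case/negP: xne; apply/eqP/ffunP => i; rewrite -e !ffunE.
by rewrite addrC addKr.
Qed.

Lemma D_count n k (a : src n k) t : (1 < n)%N -> (0 < k)%N ->
  cond_event_count (a, t) = (#|Uset n k| * n ^ k.-1)%N.
Proof.
move=> n1 k0.
rewrite /cond_event_count card_sumA sum_pair.
transitivity (\sum_(m : src n k) \sum_(y : src n k) ((y \in Uset n k) && (Ups y m == t)))%N.
  apply: eq_bigr => m _; rewrite sum_pair exchange_big; apply: eq_bigr => y _ /=.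
  rewrite -(@inner_x n k m a t y); apply: eq_bigr => x _; by rewrite inE.
rewrite exchange_big card_sumA big_distrl; apply: eq_bigr => y _ /=.
case yU: (y \in Uset n k) => /=; last by rewrite mul0n big1.
rewrite mul1n; apply: fiber_card => //; by move: yU; rewrite inE.
Qed.

Lemma N_count n k (mm : src n k) (a : src n k) t :
  #|[set mk : src n k * keyT n k | (mk.2 \in keys n k) && (enc mk.2 mk.1 == (a, t)) && (mk.1 == mm)]|
  = #|[set y in Uset n k | Ups y mm == t]|.
Proof.
rewrite card_sumA sum_pair (bigD1 mm) //= [X in (_ + X)%N]big1 ?addn0; last first.
  move=> m mne; apply: big1 => kap _; by rewrite inE (negbTE mne) andbF.
rewrite sum_pair exchange_big card_sumA; apply: eq_bigr => y _ /=.
rewrite inE -(@inner_x n k mm a t y); apply: eq_bigr => x _; by rewrite inE eqxx andbT.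
Qed.
Definition Hb n k (F : ctT n k -> ctT n k) (a : src n k) (t : 'Z_n) (y : src n k) : bool :=
  (F (a, t) != (a, t)) && (Ups y [ffun i => (F (a, t)).1 i - a i] == (F (a, t)).2 - t).
Arguments Hb {n k}.

Lemma card_keys n k : (1 < n)%N -> #|keys n k| = (n ^ k * #|Uset n k|)%N.
Proof.
move=> n1; rewrite card_sumA sum_pair (eq_bigr (fun _ => #|Uset n k|)).
  by rewrite sum_nat_const card_src.
move=> x _; rewrite card_sumA; apply: eq_bigr => y _.
by rewrite !inE.
Qed.

Lemma step1 n k (F : ctT n k -> ctT n k) :
  #|[set mk : (src n k * keyT n k)%type | (mk.2 \in keys n k) &&
        (F (enc mk.2 mk.1) != enc mk.2 mk.1) && (dec mk.2 (F (enc mk.2 mk.1)) != None)]|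
  = (\sum_(a : src n k) \sum_(m : src n k) \sum_(y : src n k)
        ((y \in Uset n k) && Hb F a (Ups y m) y))%N.
Proof.
rewrite card_sumA sum_pair.
transitivity (\sum_(m : src n k) \sum_(a : src n k) \sum_(y : src n k)
        ((y \in Uset n k) && Hb F a (Ups y m) y))%N; last by rewrite exchange_big.
apply: eq_bigr => m _; rewrite sum_pair.
pose h (a' : src n k) : src n k := [ffun i => a' i - m i].
have hinj : injective h.
  by move=> u v /ffunP e; apply/ffunP => i; have := e i; rewrite !ffunE => /addIr.
rewrite (reindex_inj hinj) /=; apply: eq_bigr => a _; apply: eq_bigr => y _.
have ea : [ffun i => m i + h a i] = a.
  by apply/ffunP => i; rewrite !ffunE addrC subrK.
rewrite inE /enc /= ea /Hb -andbA.
have -> : ((h a, y) \in keys n k) = (y \in Uset n k) by rewrite !inE.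
congr (nat_of_bool (_ && (_ && _))).
rewrite /dec /=; set c' := F (a, Ups y m).
have -> : [ffun i => c'.1 i - h a i] = [ffun i => m i + [ffun i => c'.1 i - a i] i].
  by apply/ffunP => i; rewrite !ffunE; ring.
rewrite Ups_add; case: ifP => E.
  move/eqP: E => E; rewrite /=; apply/esym/eqP; rewrite -E; ring.
apply/esym/negbTE; move/negbT: E; apply: contra => /eqP ->.
by rewrite addrC subrK.
Qed.

Lemma step3 n k (F : ctT n k -> ctT n k) a : (1 < n)%N -> (0 < k)%N ->
  (\sum_(m : src n k) \sum_(y : src n k) ((y \in Uset n k) && Hb F a (Ups y m) y))%N
  = (\sum_(t : 'Z_n) (\sum_(y : src n k) ((y \in Uset n k) && Hb F a t y)) * n ^ k.-1)%N.
Proof.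
move=> n1 k0; rewrite exchange_big /=.
transitivity (\sum_(y : src n k) \sum_(t : 'Z_n) ((y \in Uset n k) && Hb F a t y) * n ^ k.-1)%N.
  apply: eq_bigr => y _.
  transitivity (\sum_(m : src n k) \sum_(t : 'Z_n) ((Ups y m == t) && ((y \in Uset n k) && Hb F a t y)))%N.
    apply: eq_bigr => m _; rewrite (bigD1 (Ups y m)) //= eqxx big1 ?addn0 // => t /negbTE.
    by rewrite eq_sym => ->.
  rewrite exchange_big; apply: eq_bigr => t _.
  case Q: ((y \in Uset n k) && Hb F a t y).
    move/andP: Q => [yU _]; rewrite mul1n -(@fiber_card n k y t n1 k0); last by move: yU; rewrite inE.
    by apply: eq_bigr => m _; rewrite andbT.
  by rewrite mul0n big1 // => m _; rewrite andbF.
by rewrite exchange_big; apply: eq_bigr => t _; rewrite big_distrl.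
Qed.

Lemma step4 n k (F : ctT n k -> ctT n k) a t : (1 < n)%N ->
  ((pdiv n).-1 * \sum_(y : src n k) ((y \in Uset n k) && Hb F a t y) <= #|Uset n k|)%N.
Proof.
move=> n1; rewrite /Hb; case E: (F (a, t)) => [a' t'] /=.
case: (eqVneq a' a) => [->|ne].
  rewrite big1 ?muln0 // => y _.
  have Z0 : Ups y [ffun i => a i - a i] = 0.
    by rewrite /Ups big1 // => i _; rewrite ffunE subrr mul0r.
  case: (eqVneq t' t) => [->|tt]; first by rewrite eqxx andbF.
  by rewrite Z0 [0 == _]eq_sym subr_eq0 (negbTE tt) !andbF.
have d0 : [ffun i => a' i - a i] != (0 : src n k).
  apply/negP => /eqP/ffunP e; case/negP: ne; apply/eqP/ffunP => i.
  by have := e i; rewrite !ffunE => /eqP; rewrite subr_eq0 => /eqP.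
apply: leq_trans (@key_bound n k _ (t' - t) n1 d0).
rewrite leq_mul2l; apply/orP; right.
rewrite card_sumA; apply: leq_sum => y _; rewrite !inE.
by case: [forall _, _]; case: (_ != _); case: (_ == _).
Qed.

Lemma rat_bound (N D E : nat) : (0 < D)%N -> (0 < E)%N -> (E * N <= D)%N ->
  (N%:R / D%:R <= (E%:R)^-1 :> rat).
Proof.
move=> D0 E0 h; rewrite ler_pdivrMr ?ltr0n // ler_pdivlMl ?ltr0n //.
by rewrite -natrM ler_nat.
Qed.

Theorem mainTheorem5 (n k : nat) (Hn : (1 < n)%N) (Hodd : odd n) (Hk : (1 <= k)%N) :
  auth_code_with_secrecy
    (((pdiv n).-1 * n ^ k.-1)%N%:R)^-1
    ((pdiv n).-1%:R)^-1
    (~: [set (0 : src n k)]).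
Proof.
have pp : prime (pdiv n) by apply: pdiv_prime.
have p1 : (0 < (pdiv n).-1)%N by case: (pdiv n) (prime_gt1 pp) => [|[]].
split.
  move=> m [a t] mS hpos.
  have eD := @D_count n k a t Hn Hk.
  rewrite eD in hpos; rewrite /cond_event_count in eD.
  rewrite /cond_prob N_count eD.
  apply: rat_bound => //; first by rewrite muln_gt0 p1 expn_gt0 ltnW.
  rewrite mulnAC leq_mul2r; apply/orP; right.
  apply: key_bound => //; by move: mS; rewrite !inE.
move=> F; rewrite /forge_prob.
have key : ((pdiv n).-1 * #|[set mk : (src n k * keyT n k)%type | (mk.2 \in keys n k) &&
        (F (enc mk.2 mk.1) != enc mk.2 mk.1) && (dec mk.2 (F (enc mk.2 mk.1)) != None)]|
      <= #|[set: src n k]| * #|keys n k|)%N.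
  rewrite step1 big_distrr /=.
  apply: (@leq_trans (\sum_(a : src n k) \sum_(t : 'Z_n) #|Uset n k| * n ^ k.-1)%N).
    apply: leq_sum => a _; rewrite step3 // big_distrr; apply: leq_sum => t _.
    by rewrite /= mulnA leq_mul2r step4 ?orbT.
  rewrite !sum_nat_const cardsT card_src // card_Zn // card_keys //.
  case: k Hk {F} => // k _ /=; rewrite expnS.
  by rewrite [(#|_| * _)%N]mulnC !mulnA.
case: (posnP (#|[set: src n k]| * #|keys n k|)%N) => [->|D0].
  by rewrite invr0 mulr0 invr_ge0.
by apply: rat_bound.
Qed.
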